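(* Let $X$ be a well-ordered set, $\Omega=\{P\}$ with $P$ unary, $\lambda\in K$, and equip $\mathfrak{S}(X)$ with the order $(1)$. Then $$S=\{P(x)P(y)-P(P(x)y)-P(xP(y))-\lambda P(xy)\mid x,y\in\mathfrak{S}(X)\}$$ is a Gröbner–Shirshov basis in $K\langle X;P\rangle$.
   Context: General setup. $K$ is a commutative ring with unit, $X$ a set, and $\Omega=\bigcup_{n\ge1}\Omega_n$ a set of operation symbols, $\Omega_n$ being the $n$-ary ones. For a set $A$ let $\Omega(A)=\{\delta(u_1,\dots,u_t)\mid t\ge1,\ \delta\in\Omega_t,\ u_i\in A\}$. $S(Y)$ is the free semigroup and $Y^*$ the free monoid on $Y$. $\mathfrak{S}_0=S(X)$, $\mathfrak{S}_n=S(X\cup\Omega(\mathfrak{S}_{n-1}))$, $\mathfrak{S}(X)=\bigcup_n\mathfrak{S}_n$ ($\Omega$-words); the depth $dep(u)$ is the least $n$ with $u\in\mathfrak{S}_n$. $K\langle X;\Omega\rangle$ is the free $K$-module on $\mathfrak{S}(X)$ with concatenation product and multilinearly extended operators (free associative algebra with operators $\Omega$); here $K\langle X;P\rangle$ denotes it for $\Omega=\{P\}$. Prime $\Omega$-words are elements of $X\cup\Omega(\mathfrak{S}(X))$; $bre(u)$ is the number of prime factors of $u$. $\mathfrak{S}^\star(X)$ is the set of elements of $\mathfrak{S}(X\cup\{\star\})$ with exactly one $\star$, and $u|_s$ is substitution of $s$ for $\star$. Monomial ordering: well order on $\mathfrak{S}(X)$ with $w>v\Rightarrow u|_w>u|_v$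 for $u\in\mathfrak{S}^\star(X)$. $\bar f$ = leading word; monic = leading coefficient $1$. Compositions of monic $f,g$: intersection $(f,g)_w=fa-bg$ when $w=\bar fa=b\bar g$, $a,b\in\mathfrak{S}(X)$, $bre(w)<bre(\bar f)+bre(\bar g)$; including $(f,g)_w=f-u|_g$ when $w=\bar f=u|_{\bar g}$, $u\in\mathfrak{S}^\star(X)$. $p\equiv q\ \mathrm{mod}(S,w)$ means $p-q=\sum\alpha_iu_i|_{s_i}$ with $s_i\in S$, $u_i\in\mathfrak{S}^\star(X)$, $u_i|_{\overline{s_i}}<w$. $S$ is a Gröbner–Shirshov basis if all compositions of elements of $S$ are $\equiv0\ \mathrm{mod}(S,w)$. Order (1): Let $X$ and $\Omega$ be well ordered and order $X^*$ by deg-lex (first by length, then lexicographically). Each $u\in\mathfrak{S}(X)$ is uniquely written $u=u_0\,\delta_1(\overrightarrow{x_1})\,u_1\cdots\delta_t(\overrightarrow{x_t})\,u_t$ with $t\ge0$, $u_i\in X^*$, $\delta_k\in\Omega_{i_k}$, $\overrightarrow{x_k}\in\mathfrak{S}(X)^{i_k}$. Set $wt(u)=(t,\delta_1,\overrightarrow{x_1},\dots,\delta_t,\overrightarrow{x_t},u_0,\dots,u_t)$, and define $u>v$ iff $wt(u)>wt(v)$ lexicographically, where integers are compared as usual, operators by the order of $\Omega$, words of $X^*$ by deg-lex, and tuples of $\Omega$-words lexicographically using the order being defined (by induction on $dep(u)+dep(v)$). *)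

(* Defs.v *)
From HB Require Import structures.
From mathcomp Require Import all_boot all_order all_algebra.
Set Implicit Arguments. Unset Strict Implicit. Unset Printing Implicit Defensive.
Import Order.TTheory GRing.Theory.
Local Open Scope ring_scope.

(* An Omega-word (element of the free semigroup S(X u Omega(...))) is a     *)
(* NONEMPTY sequence of prime words; nonemptiness is imposed by the         *)
(* validity predicate [word_valid].                                         *)

Inductive pw (A : Type) : Type :=
| PX of A
| PP of seq (pw A).
Arguments PX {A}.
Arguments PP {A}.

Definition word (A : Type) := seq (pw A).

Section PwEq.
Variable A : eqType.

Fixpoint pw_enc (p : pw A) : GenTree.tree A :=
  match p with
  | PX a => GenTree.Leaf a
  | PP s => GenTree.Node 0 (map pw_enc s)
  end.

Fixpoint pw_dec (t : GenTree.tree A) : option (pw A) :=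
  match t with
  | GenTree.Leaf a => Some (PX a)
  | GenTree.Node _ ts => Some (PP (pmap pw_dec ts))
  end.

Lemma pw_encK : pcancel pw_enc pw_dec.
Proof.
rewrite /pcancel; fix IH 1; case=> [a|s] //=; congr (Some (PP _)).
elim: s => [|p s IHs] //=.
by rewrite IH /= IHs.
Qed.

HB.instance Definition _ := Equality.copy (pw A) (pcan_type pw_encK).
End PwEq.

Section Words.
Variable A : Type.

Fixpoint pw_valid (p : pw A) : bool :=
  match p with
  | PX _ => true
  | PP s => ~~ nilp s && all pw_valid s
  end.

(* w is an element of S(X) (resp. of S(X u {star}) for A = option X) *)
Definition word_valid (w : word A) : bool := ~~ nilp w && all pw_valid w.

(* size used only as fuel for the recursive order *)
Fixpoint pw_size (p : pw A) : nat :=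
  match p with
  | PX _ => 1
  | PP s => (sumn (map pw_size s)).+1
  end.
Definition word_size (w : word A) : nat := sumn (map pw_size w).

Definition bre (w : word A) : nat := size w.
End Words.

(* u = u_0 P(x_1) u_1 ... P(x_t) u_t with u_i in X^*;                        *)
(* wt(u) = (t, P, x_1, ..., P, x_t, u_0, ..., u_t), compared                 *)
(* lexicographically (all operators equal P).                                *)

Section Order1.
Variables (d : Order.disp_t) (X : orderType d).

Definition tops (u : word X) : seq (word X) :=
  pmap (fun p => if p is PP s then Some s else None) u.

(* the segments u_0, ..., u_t (always t+1 of them) *)
Fixpoint segs (u : word X) : seq (seq X) :=
  match u with
  | [::] => [:: [::]]
  | PX x :: u' =>
      match segs u' with
      | h :: r => (x :: h) :: r
      | [::] => [:: [:: x]]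
      end
  | PP _ :: u' => [::] :: segs u'
  end.

Definition cmpX (x y : X) : comparison :=
  if (x < y)%O then Lt else if x == y then Eq else Gt.

Fixpoint lexcmp (T : Type) (f : T -> T -> comparison) (s t : seq T)
  : comparison :=
  match s, t with
  | [::], [::] => Eq
  | [::], _ => Lt
  | _, [::] => Gt
  | a :: s', b :: t' =>
      match f a b with
      | Eq => lexcmp f s' t'
      | c => c
      end
  end.

Definition deglex (s t : seq X) : comparison :=
  match Nat.compare (size s) (size t) with
  | Eq => lexcmp cmpX s t
  | c => c
  end.

Fixpoint wcmpn (n : nat) (u v : word X) : comparison :=
  match n with
  | 0 => Eq
  | n'.+1 =>
      match Nat.compare (size (tops u)) (size (tops v)) with
      | Eq =>
          match lexcmp (wcmpn n') (tops u) (tops v) with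
          | Eq => lexcmp deglex (segs u) (segs v)
          | c => c
          end
      | c => c
      end
  end.

(* fuel word_size u + word_size v exceeds dep(u) + dep(v), so wcmp is the
   order (1) defined by induction on dep(u) + dep(v) *)
Definition wcmp (u v : word X) : comparison :=
  wcmpn (word_size u + word_size v) u v.

Definition wlt (u v : word X) : bool :=
  if wcmp u v is Lt then true else false.
End Order1.

(* The free algebra K<X;P>: elements are finite formal K-linear combinations *)
(* of Omega-words, represented as lists; two lists denote the same element   *)
(* iff they have the same coefficient at every word ([peq]).                *)

Section FreeAlg.
Variables (d : Order.disp_t) (X : orderType d) (K : comNzRingType).

Definition poly := seq (K * word X).

Definition coef (f : poly) (w : word X) : K :=
  \sum_(a <- f) (if a.2 == w then a.1 else 0).

Definition peq (f g : poly) : Prop := forall w, coef f w = coef g w.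

Definition padd (f g : poly) : poly := f ++ g.
Definition pscale (c : K) (f : poly) : poly := [seq (c * a.1, a.2) | a <- f].
Definition psub (f g : poly) : poly := padd f (pscale (-1) g).
Definition pmul (f g : poly) : poly :=
  [seq (a.1 * b.1, a.2 ++ b.2) | a <- f, b <- g].
Definition pmono (w : word X) : poly := [:: (1, w)].
Definition pP (f : poly) : poly := [seq (a.1, [:: PP a.2]) | a <- f].

Definition is_lead (f : poly) (w : word X) : Prop :=
  coef f w != 0 /\ forall v, coef f v != 0 -> v = w \/ wlt v w.

Definition monic (f : poly) : Prop := exists w, is_lead f w /\ coef f w = 1.

(* star-words: elements of S(X u {star}) with exactly one star;
   the star is the letter [None]. *)
Fixpoint nstar (p : pw (option X)) : nat :=
  match p with
  | PX None => 1
  | PX (Some _) => 0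
  | PP s => sumn (map nstar s)
  end.

Definition starword (u : word (option X)) : bool :=
  word_valid u && (sumn (map nstar u) == 1%N).

Fixpoint substp (w : word X) (p : pw (option X)) : word X :=
  match p with
  | PX None => w
  | PX (Some x) => [:: PX x]
  | PP s => [:: PP (flatten (map (substp w) s))]
  end.
Definition subst (u : word (option X)) (w : word X) : word X :=
  flatten (map (substp w) u).

(* u|_s for a polynomial s (linear in s since u has exactly one star) *)
Definition psubst (u : word (option X)) (f : poly) : poly :=
  [seq (a.1, subst u a.2) | a <- f].

Definition congr_mod (S : poly -> Prop) (p q : poly) (w : word X) : Prop :=
  exists l : seq (K * word (option X) * poly),
    (forall e, e \in l ->
       [/\ starword e.1.2, S e.2 &
           exists sb, is_lead e.2 sb /\ wlt (subst e.1.2 sb) w]) /\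
    peq (psub p q)
        (flatten [seq pscale e.1.1 (psubst e.1.2 e.2) | e <- l]).

Definition GSbasis (S : poly -> Prop) : Prop :=
  (forall f, S f -> monic f) /\
  forall f g fb gb, S f -> S g -> is_lead f fb -> is_lead g gb ->
    (forall a b w : word X, word_valid a -> word_valid b ->
       w = fb ++ a -> w = b ++ gb -> (bre w < bre fb + bre gb)%N ->
       congr_mod S (psub (pmul f (pmono a)) (pmul (pmono b) g)) [::] w) /\
    (forall u : word (option X), starword u -> fb = subst u gb ->
       congr_mod S (psub f (psubst u g)) [::] fb).

Definition rb_rel (lambda : K) (x y : word X) : poly :=
  psub (psub (psub (pmul (pP (pmono x)) (pP (pmono y)))
                   (pP (pmul (pP (pmono x)) (pmono y))))
             (pP (pmul (pmono x) (pP (pmono y)))))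
       (pscale lambda (pP (pmul (pmono x) (pmono y)))).

Definition rbS (lambda : K) (f : poly) : Prop :=
  exists x y : word X, [/\ word_valid x, word_valid y & f = rb_rel lambda x y].
End FreeAlg.

(* Main.v *)
Require Import Defs.
From HB Require Import structures.
From mathcomp Require Import all_boot all_order all_algebra.
From Stdlib Require List.
From Stdlib Require Import Lia.
Set Implicit Arguments. Unset Strict Implicit. Unset Printing Implicit Defensive.
Import Order.TTheory GRing.Theory.
From Stdlib Require Import Ring.

Lemma pw_ind' (A : Type) (P : pw A -> Prop) :
  (forall a, P (PX a)) -> (forall s, List.Forall P s -> P (PP s)) ->
  forall p, P p.
Proof.
move=> HX HP; fix IH 1; case=> [a|s]; first exact: HX.
apply: HP; elim: s => [|q s IHs]; first exact: List.Forall_nil.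
exact: (List.Forall_cons _ (IH q) IHs).
Qed.

Section Ord.
Variables (d : Order.disp_t) (X : orderType d).

Lemma lexcmp_refl (T : Type) (f : T -> T -> comparison) s :
  (forall a, f a a = Eq) -> lexcmp f s s = Eq.
Proof. by move=> H; elim: s => //= a s ->; rewrite H. Qed.

Lemma lexcmp_cat (T : Type) (f : T -> T -> comparison) p q q' :
  (forall a, f a a = Eq) -> lexcmp f (p ++ q) (p ++ q') = lexcmp f q q'.
Proof. by move=> H; elim: p => //= a p ->; rewrite H. Qed.

Lemma cmpX_refl (x : X) : cmpX x x = Eq.
Proof. by rewrite /cmpX ltxx eqxx. Qed.

Lemma deglex_refl (s : seq X) : deglex s s = Eq.
Proof. by rewrite /deglex PeanoNat.Nat.compare_refl lexcmp_refl //; apply: cmpX_refl. Qed.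

Lemma wcmpn_refl n (u : word X) : wcmpn n u u = Eq.
Proof.
elim: n u => //= n IH u.
rewrite PeanoNat.Nat.compare_refl lexcmp_refl // lexcmp_refl //.
exact: deglex_refl.
Qed.

Lemma tops_cat (u v : word X) : tops (u ++ v) = tops u ++ tops v.
Proof. by rewrite /tops pmap_cat. Qed.

Lemma ws_cat (A : Type) (u v : word A) : word_size (u ++ v) = word_size u + word_size v.
Proof. by rewrite /word_size map_cat sumn_cat. Qed.

Lemma ws_pos (A : Type) (u : word A) : 0 < size u -> 0 < word_size u.
Proof. by case: u => //= p u _; case: p. Qed.

Lemma wlt_count (u v : word X) : (size (tops u) < size (tops v))%N -> wlt u v.
Proof.
move=> H; rewrite /wlt /wcmp.
have : 0 < size v by case: v H; rewrite ?ltn0.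
move/(ws_pos) => Hv.
case E: (word_size u + word_size v) => [|n]; first by have := leq_addl (word_size u) (word_size v); rewrite E leqn0 => /eqP Hv0; rewrite Hv0 in Hv.
rewrite /=; have -> : Nat.compare (size (tops u)) (size (tops v)) = Lt
  by apply/PeanoNat.Nat.compare_lt_iff; exact/ssrnat.ltP.
done.
Qed.

Lemma not_wlt_count (u v : word X) : (size (tops v) < size (tops u))%N -> ~~ wlt u v.
Proof.
move=> H; rewrite /wlt /wcmp.
have : 0 < size u by case: u H; rewrite ?ltn0.
move/(ws_pos) => Hu.
case E: (word_size u + word_size v) => [|n]; first by have := leq_addr (word_size v) (word_size u); rewrite E leqn0 => /eqP Hv0; rewrite Hv0 in Hu.
rewrite /=; have -> : Nat.compare (size (tops u)) (size (tops v)) = Gt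
  by apply/PeanoNat.Nat.compare_gt_iff; exact/ssrnat.ltP.
done.
Qed.

Lemma subst_cons (p : pw (option X)) s (a : word X) :
  subst (p :: s) a = substp a p ++ subst s a.
Proof. by []. Qed.

Lemma subst_nil (a : word X) : subst [::] a = [::].
Proof. by []. Qed.

Lemma subst_cat s1 s2 (a : word X) : subst (s1 ++ s2) a = subst s1 a ++ subst s2 a.
Proof. by rewrite /subst map_cat flatten_cat. Qed.

Lemma substPP r (a : word X) : substp a (PP r) = [:: PP (subst r a)].
Proof. by []. Qed.

Lemma substp_free (a b : word X) p : nstar p = 0 -> substp a p = substp b p.
Proof.
elim/pw_ind': p => [[x|]|s IH] //= H.
congr [:: PP _]; elim: s IH H => //= q s IHs HF.
inversion HF; subst => /eqP; rewrite addn_eq0 => /andP[/eqP Hq /eqP Hs].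
by rewrite H1 // IHs // Hs.
Qed.

Lemma subst_free (a b : word X) s : sumn (map (@nstar _ X) s) = 0 -> subst s a = subst s b.
Proof.
elim: s => //= q s IHs /eqP; rewrite addn_eq0 => /andP[/eqP Hq /eqP Hs].
by rewrite !subst_cons (substp_free a b Hq) IHs.
Qed.

Lemma ws_substp (a : word X) p : 0 < word_size a -> pw_size p <= word_size (substp a p).
Proof.
move=> Ha; elim/pw_ind': p => [[x|]|s IH] //=.
rewrite /word_size /= addn0 ltnS.
elim: s IH => //= q s IHs HF; inversion HF; subst.
rewrite /subst /= map_cat sumn_cat leq_add //; exact: IHs.
Qed.

Lemma ws_subst (a : word X) s : 0 < word_size a -> word_size s <= word_size (subst s a).
Proof.
move=> Ha; elim: s => //= q s IHs.
rewrite subst_cons ws_cat /word_size /=; apply: leq_add => //; exact: ws_substp.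
Qed.

Section Key.
Variables (a b : word X).
Hypothesis hab : size (tops a) < size (tops b).

Lemma keyC n
  (IHn : forall r, sumn (map (@nstar _ X) r) = 1 -> word_size r <= n ->
         wcmpn n (subst r a) (subst r b) = Lt) s :
  sumn (map (@nstar _ X) s) = 1 -> word_size s <= n.+1 ->
  (size (tops (subst s a)) < size (tops (subst s b))) \/
  (size (tops (subst s a)) = size (tops (subst s b)) /\
   lexcmp (wcmpn n) (tops (subst s a)) (tops (subst s b)) = Lt).
Proof.
elim: s => //= p s IHs Hsum Hws.
rewrite !subst_cons !tops_cat !size_cat.
have Hws' : word_size s <= n.+1.
  by apply: leq_trans Hws; rewrite /word_size /= leq_addl.
case Hp: (nstar p) Hsum => [|k] /=.
- rewrite add0n => Hs.
  rewrite (substp_free b a Hp).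
  case: (IHs Hs Hws') => [H|[H1 H2]]; [left|right].
  + by rewrite ltn_add2l.
  + by rewrite H1 lexcmp_cat ?H2 //; exact: wcmpn_refl.
- case: k Hp => [|k] Hp; last by rewrite addSn.
  rewrite add1n => /eqP; rewrite eqSS => /eqP Hs.
  rewrite (subst_free a b Hs).
  move: Hp Hws; case: p => [[x|]|r] //= Hp Hws.
  + by left; rewrite ltn_add2r.
  + right; split; first by [].
    rewrite /= IHn //.
    by move: Hws; rewrite /word_size /= addSn ltnS => /(leq_trans (leq_addr _ _)).
Qed.

Lemma key n s : sumn (map (@nstar _ X) s) = 1 -> word_size s <= n ->
  wcmpn n (subst s a) (subst s b) = Lt.
Proof.
elim: n s => [|n IHn] s Hs Hws.
  case: s Hs Hws => //= p s _; rewrite /word_size /=; case: p => //.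
case: (keyC IHn Hs Hws) => [H|[H1 H2]] /=.
- by have -> : Nat.compare (size (tops (subst s a))) (size (tops (subst s b))) = Lt
    by apply/PeanoNat.Nat.compare_lt_iff; exact/ssrnat.ltP.
- by rewrite H1 PeanoNat.Nat.compare_refl H2.
Qed.
End Key.

Lemma wlt_unfold (u v : word X) n :
  word_size u + word_size v = n.+1 -> wcmpn n.+1 u v = Lt -> wlt u v.
Proof. by rewrite /wlt /wcmp => ->  ->. Qed.

Lemma key2l s (a b y : word X) : sumn (map (@nstar _ X) s) = 1 ->
  size (tops a) < size (tops b) ->
  wlt [:: PP (subst s a); PP y] [:: PP (subst s b); PP y].
Proof.
move=> Hs hab.
have Hb : 0 < word_size b by apply: ws_pos; case: (b) hab => //=; rewrite ltn0.
have [n HN] : exists n, word_size [:: PP (subst s a); PP y] + word_size [:: PP (subst s b); PP y] = n.+1.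
  by eexists; rewrite /word_size /= addSn.
apply: (wlt_unfold HN) => /=.
rewrite ?PeanoNat.Nat.compare_refl /= (@key a b hab) //.
apply: leq_trans (ws_subst s Hb) _.
move: HN; rewrite /word_size /= => H; apply/ssrnat.leP; move: H; rewrite -!plusE; lia.
Qed.

Lemma key2r s (a b x : word X) : sumn (map (@nstar _ X) s) = 1 ->
  size (tops a) < size (tops b) ->
  wlt [:: PP x; PP (subst s a)] [:: PP x; PP (subst s b)].
Proof.
move=> Hs hab.
have Hb : 0 < word_size b by apply: ws_pos; case: (b) hab => //=; rewrite ltn0.
have [n HN] : exists n, word_size [:: PP x; PP (subst s a)] + word_size [:: PP x; PP (subst s b)] = n.+1.
  by eexists; rewrite /word_size /= addSn.
apply: (wlt_unfold HN) => /=.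
rewrite ?PeanoNat.Nat.compare_refl /= wcmpn_refl (@key a b hab) //.
apply: leq_trans (ws_subst s Hb) _.
move: HN; rewrite /word_size /= => H; apply/ssrnat.leP; move: H; rewrite -!plusE; lia.
Qed.

Fixpoint liftp (p : pw X) : pw (option X) :=
  match p with PX x => PX (Some x) | PP s => PP (map liftp s) end.
Definition liftw (y : word X) : word (option X) := map liftp y.

Lemma liftp_props (a : word X) p :
  [/\ nstar (liftp p) = 0, substp a (liftp p) = [:: p] & pw_valid (liftp p) = pw_valid p].
Proof.
elim/pw_ind': p => [x|s IH] //=.
have : [/\ sumn (map (@nstar _ X) (map liftp s)) = 0, subst (map liftp s) a = s &
   all (@pw_valid _) (map liftp s) = all (@pw_valid _) s].
  elim: s IH => //= q s IHs /List.Forall_cons_iff [HFq HFs].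
  case: HFq => H1 H2 H3; case: (IHs HFs) => H4 H5 H6.
  by rewrite subst_cons H1 H2 H3 H4 H5 H6.
case=> H1 H2 H3; split => //; first by move: H2; rewrite /subst => ->.
by rewrite H3; case: (s) {IH H1 H2 H3}.
Qed.

Lemma lift_props (a y : word X) :
  [/\ sumn (map (@nstar _ X) (liftw y)) = 0, subst (liftw y) a = y &
      word_valid (liftw y) = word_valid y].
Proof.
split.
- by rewrite /liftw; elim: y => //= q y ->; case: (liftp_props a q) => ->.
- by rewrite /liftw; elim: y => //= q y IH; rewrite subst_cons IH; case: (liftp_props a q) => _ ->.
- rewrite /word_valid /liftw /nilp size_map all_map; congr (_ && _).
  by apply: eq_all => p /=; case: (liftp_props a p).
Qed.

Lemma substp_valid (a : word X) p : word_valid a -> pw_valid p -> word_valid (substp a p).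
Proof.
move=> Ha; elim/pw_ind': p => [[x|]|s IH] //= /andP[Hn Hall].
rewrite /word_valid /= andbT.
elim: s IH Hn Hall => //= q s IHs /List.Forall_cons_iff [HFq HFs] _ /andP[Hq Hs].
move: (HFq Hq) => /andP[Hq1 Hq2].
rewrite /subst /= all_cat Hq2 /=.
case: s IHs HFs Hs => [|q' s] IHs HFs Hs.
  by rewrite /= cats0 Hq1.
have /andP[_ ->] := IHs HFs isT Hs; rewrite andbT.
by move: Hq1; case: (substp a q).
Qed.

Lemma subst_valid (a : word X) s : word_valid a -> word_valid s -> word_valid (subst s a).
Proof.
move=> Ha /andP[]; elim: s => //= q s IHs _ /andP[Hq Hs].
rewrite subst_cons; have /andP[Hq1 Hq2] := substp_valid Ha Hq.
rewrite /word_valid all_cat Hq2 /=.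
case: s IHs Hs => [|q' s] IHs Hs; first by rewrite /= cats0 Hq1.
have /andP[_ ->] := IHs isT Hs; rewrite andbT.
by move: Hq1; case: (substp a q).
Qed.
End Ord.
Local Open Scope ring_scope.

Arguments rb_rel : simpl never.
Arguments psubst : simpl never.
Arguments pscale : simpl never.
Arguments pmul : simpl never.
Arguments subst : simpl never.
Arguments psub : simpl never.
Arguments padd : simpl never.
Arguments coef : simpl never.

Section Alg.
Variables (d : Order.disp_t) (X : orderType d) (K : comNzRingType).

Definition Kadd (a b : K) : K := a + b.
Definition Kmul (a b : K) : K := a * b.
Definition Kopp (a : K) : K := - a.
Definition Ksub (a b : K) : K := a - b.
Definition K0 : K := 0.
Definition K1 : K := 1.
Lemma addE (a b : K) : a + b = Kadd a b. Proof. by []. Qed.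
Lemma mulE (a b : K) : a * b = Kmul a b. Proof. by []. Qed.
Lemma oppE (a : K) : - a = Kopp a. Proof. by []. Qed.
Lemma zeroE : (0 : K) = K0. Proof. by []. Qed.
Lemma oneE : (1 : K) = K1. Proof. by []. Qed.

Lemma Kth : @ring_theory (GRing.ComNzRing.sort K) K0 K1 Kadd Kmul Ksub Kopp eq.
Proof.
constructor=> //; rewrite /K0 /K1 /Kadd /Kmul /Ksub /Kopp.
- exact: add0r. - exact: addrC. - exact: addrA. - exact: mul1r. - exact: mulrC.
- exact: mulrA. - exact: mulrDl. - exact: subrr.
Qed.
Add Ring Kring : Kth.
Ltac kring := rewrite ?addE ?mulE ?oppE ?zeroE ?oneE;
  match goal with |- @eq _ ?a ?b => change (@eq (GRing.ComNzRing.sort K) a b); ring end.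

Definition ind (b : bool) : K := if b then 1 else 0.
Arguments ind : simpl never.

Implicit Types (f g : Defs.poly X K) (w v W x y z : word X) (lam : K).

Lemma coef_nil w : coef ([::] : Defs.poly X K) w = 0.
Proof. by rewrite /coef big_nil. Qed.

Lemma coef_cons c W f w : coef ((c, W) :: f) w = c * ind (W == w) + coef f w.
Proof. by rewrite /coef big_cons /ind /=; case: (W == w); rewrite ?mulr1 ?mulr0. Qed.

Lemma coef_cat f g w : coef (f ++ g) w = coef f w + coef g w.
Proof. by rewrite /coef big_cat. Qed.

Lemma coef_scale c f w : coef (pscale c f) w = c * coef f w.
Proof.
elim: f => [|[a W] f IH]; first by rewrite /pscale /= !coef_nil mulr0.
by rewrite /pscale /= !coef_cons -/(pscale c f) IH mulrDr mulrA.
Qed.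

Lemma coef_sub f g w : coef (psub f g) w = coef f w - coef g w.
Proof. by rewrite /psub /padd coef_cat coef_scale mulN1r. Qed.

Lemma coef_flatten (T : Type) (F : T -> Defs.poly X K) l w :
  coef (flatten (map F l)) w = \sum_(e <- l) coef (F e) w.
Proof.
elim: l => [|e l IH]; first by rewrite big_nil coef_nil.
by rewrite /= coef_cat IH big_cons.
Qed.

Lemma pmul_r f a : pmul f (pmono K a) = [seq (e.1, e.2 ++ a) | e <- f].
Proof. by rewrite /pmul; elim: f => //= [[c W] f] IH; rewrite mulr1 IH. Qed.

Lemma pmul_l f b : pmul (pmono K b) f = [seq (e.1, b ++ e.2) | e <- f].
Proof. by rewrite /pmul /= cats0; elim: f => //= [[c W] f] IH; rewrite mul1r IH. Qed.

Lemma coef_rbmap (phi : word X -> word X) lam x y w :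
  coef [seq (e.1, phi e.2) | e <- rb_rel lam x y] w =
  ind (phi [:: PP x; PP y] == w) - ind (phi [:: PP (PP x :: y)] == w)
  - ind (phi [:: PP (x ++ [:: PP y])] == w) - lam * ind (phi [:: PP (x ++ y)] == w).
Proof.
rewrite /rb_rel /psub /padd /pscale /pmul /pP /pmono /=.
rewrite !coef_cons coef_nil.
kring.
Qed.


Lemma map_pair_id (f : Defs.poly X K) : [seq (e.1, e.2) | e <- f] = f.
Proof. by elim: f => //= [[c W] f] ->. Qed.

Lemma coef_rb lam x y w : coef (rb_rel lam x y) w =
  ind ([:: PP x; PP y] == w) - ind ([:: PP (PP x :: y)] == w)
  - ind ([:: PP (x ++ [:: PP y])] == w) - lam * ind ([:: PP (x ++ y)] == w).
Proof. by rewrite -[rb_rel lam x y]map_pair_id (coef_rbmap id). Qed.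

Lemma eq_size_false (u v : word X) : size u != size v -> (u == v) = false.
Proof. by apply: contraNF => /eqP ->. Qed.

Lemma ind_false b : b = false -> ind b = 0. Proof. by move->. Qed.
Lemma ind_true b : b = true -> ind b = 1. Proof. by move->. Qed.

Lemma coef_rb_nz lam x y v : coef (rb_rel lam x y) v != 0 ->
  [\/ v = [:: PP x; PP y], v = [:: PP (PP x :: y)],
      v = [:: PP (x ++ [:: PP y])] | v = [:: PP (x ++ y)]].
Proof.
rewrite coef_rb.
case E1: ([:: PP x; PP y] == v); first by move/eqP: E1 => <-; constructor 1.
case E2: ([:: PP (PP x :: y)] == v); first by move/eqP: E2 => <-; constructor 2.
case E3: ([:: PP (x ++ [:: PP y])] == v); first by move/eqP: E3 => <-; constructor 3.
case E4: ([:: PP (x ++ y)] == v); first by move/eqP: E4 => <-; constructor 4.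
by rewrite /ind /= mulr0 !subr0 eqxx.
Qed.

Lemma coef_rb_lead lam x y : coef (rb_rel lam x y) [:: PP x; PP y] = 1.
Proof.
rewrite coef_rb eqxx !eq_size_false //= /ind.
rewrite mulr0 !subr0 //.
Qed.

Lemma lead_rb lam x y W : is_lead (rb_rel lam x y) W <-> W = [:: PP x; PP y].
Proof.
split.
- case=> Hc Hall.
  case: (coef_rb_nz Hc) => // HW;
  (have := Hall [:: PP x; PP y]; rewrite coef_rb_lead oner_neq0 HW => /(_ isT);
   case=> [/(congr1 size) //|]; by rewrite (negbTE (not_wlt_count _))).
- move=> ->; split; first by rewrite coef_rb_lead oner_neq0.
  move=> v /coef_rb_nz [] ->; [by left| | |]; right; exact: wlt_count.
Qed.


Lemma subst_star W : subst [:: PX None] W = W.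
Proof. by rewrite subst_cons subst_nil cats0. Qed.

Lemma subst_Pl z W : subst [:: PP (PX None :: liftw z)] W = [:: PP (W ++ z)].
Proof.
rewrite subst_cons subst_nil cats0 substPP subst_cons.
by case: (lift_props W z) => _ -> _.
Qed.

Lemma subst_Pr x W : subst [:: PP (liftw x ++ [:: PX None])] W = [:: PP (x ++ W)].
Proof.
rewrite subst_cons subst_nil cats0 substPP subst_cat subst_star.
by case: (lift_props W x) => _ -> _.
Qed.

Lemma starword_star : starword [:: @PX (option X) None].
Proof. by []. Qed.

Lemma starword_Pl z : word_valid z -> starword [:: PP (PX None :: liftw z)].
Proof.
case: (lift_props [::] z) => H1 _ H3 Hz.
have /andP[_ Hall] : word_valid (liftw z) by rewrite H3.
by rewrite /starword /word_valid /= Hall H1.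
Qed.

Lemma starword_Pr x : word_valid x -> starword [:: PP (liftw x ++ [:: PX None])].
Proof.
case: (lift_props [::] x) => H1 _ H3 Hx.
have /andP[Hn Hall] : word_valid (liftw x) by rewrite H3.
rewrite /starword /word_valid /= map_cat sumn_cat H1 /= all_cat Hall /= !andbT.
by rewrite /nilp size_cat addn1.
Qed.

Definition entryP lam (w : word X) (e : K * word (option X) * Defs.poly X K) : Prop :=
  [/\ starword e.1.2, rbS lam e.2 &
      exists sb, is_lead e.2 sb /\ wlt (subst e.1.2 sb) w].

Lemma star_entry lam c a b w : word_valid a -> word_valid b ->
  wlt [:: PP a; PP b] w -> entryP lam w (c, [:: PX None], rb_rel lam a b).
Proof.
move=> Ha Hb Hw; split => //=.
- by exists a, b.
- by exists [:: PP a; PP b]; rewrite subst_star lead_rb.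
Qed.

Lemma forall_in (T : eqType) (P : T -> Prop) (l : seq T) :
  List.Forall P l -> forall e, e \in l -> P e.
Proof.
elim: l => // a l IH /List.Forall_cons_iff [Ha Hl] e.
by rewrite inE => /orP [/eqP ->|/IH]; [|apply].
Qed.


Lemma wv_cat (A : Type) (u v : word A) : word_valid u -> word_valid v -> word_valid (u ++ v).
Proof.
rewrite /word_valid all_cat => /andP[Hu ->] /andP[_ ->].
by case: u Hu.
Qed.

Lemma wv_PP (A : Type) (u : word A) : word_valid u -> word_valid [:: PP u].
Proof. by rewrite /word_valid /= andbT. Qed.

Lemma wv_PPc (A : Type) (u v : word A) : word_valid u -> word_valid v -> word_valid (PP u :: v).
Proof. by move=> Hu Hv; apply: (wv_cat (wv_PP Hu) Hv). Qed.

Lemma inter lam x y z : word_valid x -> word_valid y -> word_valid z ->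
  congr_mod (rbS lam)
    (psub (pmul (rb_rel lam x y) (pmono K [:: PP z]))
          (pmul (pmono K [:: PP x]) (rb_rel lam y z))) [::] [:: PP x; PP y; PP z].
Proof.
move=> Hx Hy Hz.
pose l : seq (K * word (option X) * Defs.poly X K) :=
  [:: (-1, [:: PX None], rb_rel lam (PP x :: y) z);
      (-1, [:: PX None], rb_rel lam (x ++ [:: PP y]) z);
      (- lam, [:: PX None], rb_rel lam (x ++ y) z);
      (1, [:: PX None], rb_rel lam x (PP y :: z));
      (1, [:: PX None], rb_rel lam x (y ++ [:: PP z]));
      (lam, [:: PX None], rb_rel lam x (y ++ z));
      (1, [:: PP (PX None :: liftw z)], rb_rel lam x y);
      (-1, [:: PP (liftw x ++ [:: PX None])], rb_rel lam y z)].
exists l; split.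
- apply: (@forall_in _ (entryP lam [:: PP x; PP y; PP z])).
  have W2 a b : wlt [:: PP a; PP b] [:: PP x; PP y; PP z] by apply: wlt_count.
  repeat apply: List.Forall_cons; try apply: List.Forall_nil;
    try (apply: star_entry => //; 
         by repeat first [assumption | apply: wv_PP | apply: wv_PPc | apply: wv_cat]).
  + split => /=; [exact: starword_Pl| by exists x, y |].
    by exists [:: PP x; PP y]; rewrite lead_rb subst_Pl; split => //; apply: wlt_count.
  + split => /=; [exact: starword_Pr| by exists y, z |].
    by exists [:: PP y; PP z]; rewrite lead_rb subst_Pr; split => //; apply: wlt_count.
- move=> w.
  rewrite !coef_sub coef_nil pmul_r pmul_l !coef_rbmap.
  rewrite coef_flatten !big_cons big_nil; cbv beta iota delta [fst snd].
  rewrite !coef_scale /psubst !coef_rbmap !subst_star !subst_Pl !subst_Pr /= ?coef_cons ?coef_nil.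
  rewrite -!catA /= ?cats0.
  kring.
Qed.

Lemma subst_PP2 s t W : subst [:: PP s; PP t] W = [:: PP (subst s W); PP (subst t W)].
Proof. by rewrite !subst_cons subst_nil !substPP. Qed.
Lemma subst_I1 s t W : subst [:: PP (PP s :: t)] W = [:: PP (PP (subst s W) :: subst t W)].
Proof. by rewrite subst_cons subst_nil substPP subst_cons substPP. Qed.
Lemma subst_I2 s t W : subst [:: PP (s ++ [:: PP t])] W = [:: PP (subst s W ++ [:: PP (subst t W)])].
Proof. by rewrite subst_cons subst_nil substPP subst_cat subst_cons substPP subst_nil. Qed.
Lemma subst_I3 s t W : subst [:: PP (s ++ t)] W = [:: PP (subst s W ++ subst t W)].
Proof. by rewrite subst_cons subst_nil substPP subst_cat. Qed.

Lemma substp_nonnil x' y' q : (0 < size (substp [:: PP x'; PP y'] q))%N.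
Proof. by case: q => [[]|]. Qed.

Lemma subst_nil_inv x' y' u : subst u [:: PP x'; PP y'] = [::] -> u = [::].
Proof.
case: u => // q u; rewrite subst_cons => /(congr1 size); rewrite size_cat.
by have := substp_nonnil x' y' q; case: (size (substp _ q)).
Qed.

Lemma decomp x y x' y' u :
  [:: PP x; PP y] = subst u [:: PP x'; PP y'] ->
  (u = [:: PX None] /\ x = x' /\ y = y') \/
  exists s t, [/\ u = [:: PP s; PP t], x = subst s [:: PP x'; PP y'] & y = subst t [:: PP x'; PP y']].
Proof.
case: u => [|p u]; first by rewrite subst_nil.
rewrite subst_cons; case: p => [[c|]|s] //=.
- by case=> -> -> /esym Hu; left; rewrite (subst_nil_inv Hu).
- case=> Hx; case: u => [|q u]; first by rewrite subst_nil.
  rewrite subst_cons; case: q => [[c|]|t] //=.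
  case=> Hy Hu; right; exists s, t; split => //.
  by rewrite (subst_nil_inv (esym Hu)).
Qed.


Lemma starwordP (u : word (option X)) : word_valid u -> sumn (map (@nstar _ X) u) = 1%N -> starword u.
Proof. by rewrite /starword => -> ->. Qed.

Lemma starword2 s t : starword [:: PP s; PP t] ->
  [/\ word_valid s, word_valid t & (sumn (map (@nstar _ X) s) + sumn (map (@nstar _ X) t))%N = 1%N].
Proof.
by rewrite /starword /word_valid /= addn0 => /andP[/and3P[-> -> _] /eqP ->].
Qed.

Lemma incl_s lam x' y' s t : word_valid x' -> word_valid y' ->
  starword [:: PP s; PP t] -> sumn (map (@nstar _ X) s) = 1%N -> sumn (map (@nstar _ X) t) = 0%N ->
  congr_mod (rbS lam)
    (psub (rb_rel lam (subst s [:: PP x'; PP y']) (subst t [:: PP x'; PP y']))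
          (psubst [:: PP s; PP t] (rb_rel lam x' y'))) [::]
    [:: PP (subst s [:: PP x'; PP y']); PP (subst t [:: PP x'; PP y'])].
Proof.
move=> Hx' Hy' /starword2 [Hs Ht _] Hs1 Ht0.
have Hgb : word_valid [:: PP x'; PP y'] by apply: wv_PPc Hx' (wv_PP Hy').
have Hy : word_valid (subst t [:: PP x'; PP y']) by apply: subst_valid.
set y := subst t [:: PP x'; PP y'] in Hy *.
have ht W : subst t W = y by rewrite /y (subst_free W [:: PP x'; PP y'] Ht0).
pose l : seq (K * word (option X) * Defs.poly X K) :=
  [:: (1, [:: PX None], rb_rel lam (subst s [:: PP (PP x' :: y')]) y);
      (1, [:: PX None], rb_rel lam (subst s [:: PP (x' ++ [:: PP y'])]) y);
      (lam, [:: PX None], rb_rel lam (subst s [:: PP (x' ++ y')]) y);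
      (-1, [:: PP (PP s :: t)], rb_rel lam x' y');
      (-1, [:: PP (s ++ [:: PP t])], rb_rel lam x' y');
      (- lam, [:: PP (s ++ t)], rb_rel lam x' y')].
exists l; split.
- apply: (@forall_in _ (entryP lam [:: PP (subst s [:: PP x'; PP y']); PP y])).
  have W2 a : size (tops a) = 1%N ->
     wlt [:: PP (subst s a); PP y] [:: PP (subst s [:: PP x'; PP y']); PP y].
    by move=> Ha; apply: key2l => //; rewrite Ha.
  repeat apply: List.Forall_cons; try apply: List.Forall_nil;
    try (apply: star_entry => //; [apply: subst_valid => //;
         by repeat first [assumption | apply: wv_PP | apply: wv_PPc | apply: wv_cat]
         | by apply: W2]);
    (split => /=; [apply: starwordP; 
       [by repeat first [assumption | apply: wv_PP | apply: wv_PPc | apply: wv_cat]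
       | by rewrite /= ?map_cat ?sumn_cat /= Hs1 Ht0]
     | by exists x', y' |
       exists [:: PP x'; PP y']; rewrite lead_rb; split => //;
       rewrite ?subst_I1 ?subst_I2 ?subst_I3 ht; exact: wlt_count]).
- move=> w.
  rewrite coef_sub coef_nil coef_sub coef_rb /psubst coef_rbmap !subst_PP2 !ht.
  rewrite coef_flatten !big_cons big_nil; cbv beta iota delta [fst snd].
  rewrite !coef_scale !coef_rbmap !subst_star !subst_I1 !subst_I2 !subst_I3 !ht /= ?coef_cons ?coef_nil.
  kring.
Qed.


Lemma incl_t lam x' y' s t : word_valid x' -> word_valid y' ->
  starword [:: PP s; PP t] -> sumn (map (@nstar _ X) s) = 0%N -> sumn (map (@nstar _ X) t) = 1%N ->
  congr_mod (rbS lam)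
    (psub (rb_rel lam (subst s [:: PP x'; PP y']) (subst t [:: PP x'; PP y']))
          (psubst [:: PP s; PP t] (rb_rel lam x' y'))) [::]
    [:: PP (subst s [:: PP x'; PP y']); PP (subst t [:: PP x'; PP y'])].
Proof.
move=> Hx' Hy' /starword2 [Hs Ht _] Hs0 Ht1.
have Hgb : word_valid [:: PP x'; PP y'] by apply: wv_PPc Hx' (wv_PP Hy').
have Hx : word_valid (subst s [:: PP x'; PP y']) by apply: subst_valid.
set x := subst s [:: PP x'; PP y'] in Hx *.
have hs W : subst s W = x by rewrite /x (subst_free W [:: PP x'; PP y'] Hs0).
pose l : seq (K * word (option X) * Defs.poly X K) :=
  [:: (1, [:: PX None], rb_rel lam x (subst t [:: PP (PP x' :: y')]));
      (1, [:: PX None], rb_rel lam x (subst t [:: PP (x' ++ [:: PP y'])]));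
      (lam, [:: PX None], rb_rel lam x (subst t [:: PP (x' ++ y')]));
      (-1, [:: PP (PP s :: t)], rb_rel lam x' y');
      (-1, [:: PP (s ++ [:: PP t])], rb_rel lam x' y');
      (- lam, [:: PP (s ++ t)], rb_rel lam x' y')].
exists l; split.
- apply: (@forall_in _ (entryP lam [:: PP x; PP (subst t [:: PP x'; PP y'])])).
  have W2 a : size (tops a) = 1%N ->
     wlt [:: PP x; PP (subst t a)] [:: PP x; PP (subst t [:: PP x'; PP y'])].
    by move=> Ha; apply: key2r => //; rewrite Ha.
  repeat apply: List.Forall_cons; try apply: List.Forall_nil;
    try (apply: star_entry => //; [apply: subst_valid => //;
         by repeat first [assumption | apply: wv_PP | apply: wv_PPc | apply: wv_cat]
         | by apply: W2]);
    (split => /=; [apply: starwordP; 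
       [by repeat first [assumption | apply: wv_PP | apply: wv_PPc | apply: wv_cat]
       | by rewrite /= ?map_cat ?sumn_cat /= Hs0 Ht1]
     | by exists x', y' |
       exists [:: PP x'; PP y']; rewrite lead_rb; split => //;
       rewrite ?subst_I1 ?subst_I2 ?subst_I3 hs; exact: wlt_count]).
- move=> w.
  rewrite coef_sub coef_nil coef_sub coef_rb /psubst coef_rbmap !subst_PP2 !hs.
  rewrite coef_flatten !big_cons big_nil; cbv beta iota delta [fst snd].
  rewrite !coef_scale !coef_rbmap !subst_star !subst_I1 !subst_I2 !subst_I3 !hs /= ?coef_cons ?coef_nil.
  kring.
Qed.

Lemma incl_id lam x y : congr_mod (rbS lam)
    (psub (rb_rel lam x y) (psubst [:: PX None] (rb_rel lam x y))) [::] [:: PP x; PP y].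
Proof.
exists [::]; split => // w.
rewrite coef_sub coef_nil coef_sub coef_rb.
kring.
Qed.

Lemma main lam : @GSbasis d X K (@rbS d X K lam).
Proof.
split.
- move=> f [x [y [Hx Hy ->]]]; exists [:: PP x; PP y]; split; first by rewrite lead_rb.
  exact: coef_rb_lead.
- move=> f g fb gb [x [y [Hx Hy ->]]] [x' [y' [Hx' Hy' ->]]] /lead_rb -> /lead_rb ->.
  split.
  + move=> a b w Ha Hb -> Hw; rewrite /bre size_cat /= => Hs.
    case: a Ha Hw Hs => [//|a0 [|a1 a]] Ha Hw Hs; last by rewrite ltn_add2l in Hs.
    case: b Hb Hw {Hs} => [//|b0 [|b1 b]] Hb Hw; last first.
      by move: Hw => /(congr1 size) /= /eqP; rewrite size_cat addn2.
    case: Hw => <- <- ->.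
    by apply: inter.
  + move=> u Hu /decomp [[-> [-> ->]]|[s [t [Hst -> ->]]]].
    * exact: incl_id.
    * rewrite Hst in Hu *; have [_ _ Hsum] := starword2 Hu.
      case E: (sumn (map (@nstar _ X) s)) Hsum => [|[|k]] /=.
      - by rewrite add0n => Ht; apply: incl_t.
      - by rewrite add1n => /eqP; rewrite eqSS => /eqP Ht; apply: incl_s.
      - by rewrite !addSn.
Qed.

End Alg.

Theorem theorem4p1 (d : Order.disp_t) (X : orderType d)
  (X_wo : well_founded (fun a b : X => (a < b)%O))
  (K : comNzRingType) (lambda : K) :
  @GSbasis d X K (@rbS d X K lambda).
Proof. exact: main. Qed.
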